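(* For every integer $n\ge 2$, $$C_n=\frac{n+2}{2(n-1)\pi}\int_0^{\infty}\frac{t^2}{\left(t^2+\frac14\right)^{5/2}}\left[\left(2+\frac{1}{\sqrt{t^2+\frac14}}\right)^{n-1}-\left(2-\frac{1}{\sqrt{t^2+\frac14}}\right)^{n-1}\right]\mathrm{d}t .$$
   Context: $C_n=\frac{1}{n+1}\binom{2n}{n}$ denotes the $n$-th Catalan number ($n\ge 0$). *)

(* Defs.v *)
From Stdlib Require Import Reals.
From Coquelicot Require Import Coquelicot.
Open Scope R_scope.

Definition catalan (n : nat) : R := / INR (n + 1) * Binomial.C (2 * n) n.

Definition integrand (n : nat) (t : R) : R :=
  let s := t ^ 2 + / 4 in
  t ^ 2 / Rpower s (5 / 2) *
  ((2 + / sqrt s) ^ (n - 1) - (2 - / sqrt s) ^ (n - 1)).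

(* Main.v *)
Require Import Defs.
From Stdlib Require Import Reals Lia Lra.
From Coquelicot Require Import Coquelicot.
Open Scope R_scope.

Fixpoint Fw (k : nat) (x : R) : R :=
  match k with
  | O => x
  | S k => cos x ^ (2*k+1) * sin x / (2 * INR k + 2) + (2 * INR k + 1) / (2 * INR k + 2) * Fw k x
  end.

Lemma Fw_deriv k x : is_derive (Fw k) x ((cos x ^ 2) ^ k).
Proof.
induction k as [|k IH]; simpl Fw.
- simpl. auto_derive; auto; ring.
- assert (HD : Derive (Fw k) x = (cos x ^ 2) ^ k) by (apply is_derive_unique; exact IH).
  assert (Hk : 0 <= INR k) by apply pos_INR.
  auto_derive.
  + eexists; exact IH.
  + change (fun x => Fw k x) with (Fw k). rewrite HD.
    replace (Init.Nat.pred (k + (k + 0) + 1)) with (2*k)%nat by lia.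
    replace (k + (k + 0) + 1)%nat with (S (2*k)) by lia.
    rewrite S_INR, mult_INR. rewrite <- tech_pow_Rmult. rewrite pow_mult.
    assert (Hs : sin x * sin x = 1 - cos x ^ 2) by (pose proof (sin2_cos2 x) as E; unfold Rsqr in E; simpl; lra).
    replace ((cos x ^ 2) ^ S k) with (cos x ^ 2 * (cos x ^ 2) ^ k) by (simpl; ring).
    simpl INR.
    transitivity ((-(sin x * sin x) * ((2 * INR k + 1) * (cos x ^ 2) ^ k) + cos x ^ 2 * (cos x ^ 2) ^ k) * / (2 * INR k + 2) +
      (2 * INR k + 1) / (2 * INR k + 2) * ((cos x ^ 2) ^ k)). field. lra.
    rewrite Hs. field. lra.
Qed.

Lemma Fw0 k : Fw k 0 = 0.
Proof. induction k; simpl Fw; [reflexivity|]. rewrite IHk, sin_0. field. pose proof (pos_INR k); lra. Qed.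

Lemma FwPI k : Fw (S k) (PI/2) = (2 * INR k + 1) / (2 * INR k + 2) * Fw k (PI/2).
Proof. simpl Fw. rewrite cos_PI2. rewrite pow_i by lia.
 field. pose proof (pos_INR k); lra. Qed.

Lemma binom_rec k : Binomial.C (2 * S k) (S k) =
  Binomial.C (2*k) k * (2 * INR k + 1) * (2 * INR k + 2) / ((INR k + 1) * (INR k + 1)).
Proof.
unfold Binomial.C.
replace (2 * S k - S k)%nat with (S k) by lia.
replace (2 * k - k)%nat with k by lia.
replace (2 * S k)%nat with (S (S (2*k))) by lia.
rewrite !fact_simpl, !mult_INR, !S_INR, mult_INR.
pose proof (INR_fact_neq_0 k). pose proof (INR_fact_neq_0 (2*k)). pose proof (pos_INR k).
simpl INR. field. repeat split; lra.
Qed.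

Lemma FwPI_val k : Fw k (PI/2) = PI/2 * Binomial.C (2*k) k / 4 ^ k.
Proof.
induction k.
- simpl. unfold Binomial.C. simpl. field.
- rewrite FwPI, IHk, binom_rec. simpl pow. pose proof (pos_INR k).
  assert (4 ^ k <> 0) by (apply pow_nonzero; lra).
  field. repeat split; lra.
Qed.

Section S.
Variable n : nat.
Definition K := 2 ^ (2*n+3).
Definition Aw (x : R) := K * (-2 * Fw (n+2) x + 3 * Fw (n+1) x - Fw n x).
Definition Qp (X : R) := K * (-2 * X ^ (n+2) + 3 * X ^ (n+1) - X ^ n).

Lemma Aw_deriv x : is_derive Aw x (Qp (cos x ^ 2)).
Proof.
unfold Aw, Qp.
assert (E : forall k, Derive (Fw k) x = (cos x ^ 2) ^ k) by (intro k; apply is_derive_unique, Fw_deriv).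
auto_derive.
- repeat split; eexists; apply Fw_deriv.
- change (fun x => Fw (n+2) x) with (Fw (n+2)). change (fun x => Fw (n+1) x) with (Fw (n+1)).
  change (fun x => Fw n x) with (Fw n). rewrite !E. ring.
Qed.

Definition phi (t : R) := atan (2*t) / 2.
Definition Fb (t : R) := Aw (phi t) - Aw (PI/2 - phi t).
Definition gF (t : R) := (Qp (cos (phi t) ^ 2) + Qp (cos (PI/2 - phi t) ^ 2)) * / (1 + (2*t)^2).

Lemma phi_deriv t : is_derive phi t (/ (1 + (2*t)^2)).
Proof. unfold phi. auto_derive. auto. unfold Rsqr. field. nra. Qed.

Lemma Fb_deriv t : is_derive Fb t (gF t).
Proof.
assert (E : forall y, Derive Aw y = Qp (cos y ^ 2)) by (intro y; apply is_derive_unique, Aw_deriv).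
unfold Fb, gF, phi. auto_derive.
- repeat split; try (eexists; apply Aw_deriv). 
- rewrite !E. unfold Rdiv, Rminus. field. nra.
Qed.
End S.


Lemma Qp_fact n X : Qp n X = K n * X ^ n * (1 - X) * (2 * X - 1).
Proof. unfold Qp. rewrite !pow_add. simpl. ring. Qed.

Lemma divpow u k : (u / 2) ^ k = u ^ k / 2 ^ k.
Proof. unfold Rdiv. rewrite Rpow_mult_distr, pow_inv. reflexivity. Qed.

Lemma pointwise m t : integrand (S m) t = gF (S m) t.
Proof.
set (n := S m).
set (r := sqrt (1 + (2*t)*(2*t))).
assert (Hr0 : 0 < 1 + (2*t)*(2*t)) by nra.
assert (Hr : r * r = 1 + (2*t)*(2*t)) by (apply sqrt_sqrt; lra).
assert (Hrp : 0 < r) by (apply sqrt_lt_R0; lra).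
set (a := atan (2*t)).
assert (Hc : cos a = / r) by (unfold a; rewrite cos_atan; unfold r, Rsqr; field; fold r; lra).
assert (Hh : cos (a/2) ^ 2 = (1 + / r) / 2).
{ rewrite <- Hc. replace a with (2 * (a/2)) at 2 by field. rewrite cos_2a_cos. field. }
assert (Hh2 : cos (PI/2 - a/2) ^ 2 = (1 - / r) / 2).
{ rewrite cos_shift. replace (sin (a/2) ^ 2) with (1 - cos (a/2) ^ 2).
  rewrite Hh. field. lra. pose proof (sin2_cos2 (a/2)) as E. unfold Rsqr in E. simpl. nra. }
unfold gF, phi. fold a. rewrite Hh, Hh2, !Qp_fact, !divpow.
unfold integrand.
assert (Hs : sqrt (t^2 + /4) = r / 2).
{ apply sqrt_lem_1. nra. lra.
  replace (r/2*(r/2)) with (r*r/4) by field. rewrite Hr. field. }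
assert (Hp : Rpower (t^2 + /4) (5/2) = (t^2 + /4)^2 * (r/2)).
{ replace (5/2) with (INR 2 + /2) by (simpl; field). rewrite Rpower_plus, Rpower_pow, Rpower_sqrt, Hs.
  reflexivity. nra. nra. }
rewrite Hs, Hp.
replace (1 + (2*t)^2) with (r*r) by (rewrite Hr; ring).
replace (t^2) with ((r*r - 1)/4) by (rewrite Hr; field).
replace (n - 1)%nat with m by (unfold n; lia).
replace (2 + / (r/2)) with (2 * (1 + / r)) by (field; lra).
replace (2 - / (r/2)) with (2 * (1 - / r)) by (field; lra).
rewrite !Rpow_mult_distr.
unfold n, K. replace (2 * S m + 3)%nat with (m + m + 5)%nat by lia.
rewrite !pow_add. simpl (2 ^ 5). rewrite <- !tech_pow_Rmult.
assert (2 ^ m <> 0) by (apply pow_nonzero; lra).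
field. lra.
Qed.

Lemma gF_cont n t : continuous (gF n) t.
Proof.
apply (ex_derive_continuous (gF n) t). unfold gF, Qp, phi. auto_derive. unfold Rsqr. nra.
Qed.

Lemma atan2_lim : filterlim (fun t => atan (2*t)) (Rbar_locally p_infty) (locally (PI/2)).
Proof.
intros P [eps HP].
pose proof PI_RGT_0.
set (d := Rmin eps (PI/4)).
assert (Hd : 0 < d) by (unfold d; apply Rmin_pos; [apply cond_pos|lra]).
assert (Hd2 : d <= eps) by apply Rmin_l.
assert (Hd3 : d <= PI/4) by apply Rmin_r.
exists (tan (PI/2 - d) / 2). intros x Hx. apply HP.
assert (H1 : PI/2 - d < atan (2*x)).
{ rewrite <- (atan_tan (PI/2 - d)) at 1 by lra. apply atan_increasing. lra. }
pose proof (atan_bound (2*x)).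
unfold ball; simpl; unfold AbsRing_ball, abs, minus, plus, opp; simpl.
apply Rabs_def1; lra.
Qed.

Definition Gw n x := Aw n (x/2) - Aw n (PI/2 - x/2).

Lemma Gw_cont n x : continuous (Gw n) x.
Proof.
apply (ex_derive_continuous (Gw n) x). unfold Gw. auto_derive. repeat split; eexists; apply Aw_deriv.
Qed.

Lemma Fb_lim n : filterlim (Fb n) (Rbar_locally p_infty) (locally 0).
Proof.
replace 0 with (Gw n (PI/2)).
- apply (filterlim_comp _ _ _ (fun t => atan (2*t)) (Gw n) _ (locally (PI/2))).
  apply atan2_lim. apply Gw_cont.
- unfold Gw. replace (PI/2 - PI/2/2) with (PI/2/2) by field. ring.
Qed.

Theorem mainTheorem2 (n : nat) (hn : (2 <= n)%nat) :
  exists I : R,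
    is_RInt_gen (integrand n) (at_point 0) (Rbar_locally p_infty) I /\
    catalan n = (INR n + 2) / (2 * (INR n - 1) * PI) * I.
Proof.
exists (0 - Fb n 0). split.
- apply (is_RInt_gen_ext (Derive (Fb n))).
  + apply filter_forall. intros ab x _.
    rewrite (is_derive_unique _ _ _ (Fb_deriv n x)).
    destruct n as [|m]; [lia|]. symmetry; apply pointwise.
  + apply is_RInt_gen_Derive.
    * apply filter_forall. intros ab x _. eexists; apply Fb_deriv.
    * apply filter_forall. intros ab x _.
      apply (continuous_ext (gF n)). intro y. symmetry; apply is_derive_unique, Fb_deriv.
      apply gF_cont.
    * intros P HP. unfold filtermap, at_point. now apply locally_singleton.
    * apply Fb_lim.
- unfold Fb, phi. rewrite Rmult_0_r, atan_0.
  replace (0/2) with 0 by field. replace (PI/2 - 0) with (PI/2) by ring.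
  unfold Aw. rewrite !Fw0.
  replace (n+2)%nat with (S (S n)) by lia. replace (n+1)%nat with (S n) by lia.
  rewrite !FwPI, FwPI_val. rewrite S_INR.
  unfold catalan, K. rewrite plus_INR.
  rewrite pow_add, pow_mult.
  assert (H1 : 1 < INR n) by (apply lt_1_INR; lia).
  assert (4 ^ n <> 0) by (apply pow_nonzero; lra).
  pose proof PI_RGT_0.
  replace (2^2) with 4 by ring. replace (INR 1) with 1 by reflexivity.
  field. repeat split; lra.
Qed.
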